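(* Let $G$ be a strongly connected network on $\mathcal{V}$ with random-walk transition matrix $P$, stationary distribution $\pi$, $\Pi=\mathrm{diag}(\pi)$, and let $L^+$ be the Moore–Penrose pseudo-inverse of $L=\Pi(I-P)$. Then for all $i,k,m\in\mathcal{V}$, $$L^+_{im}+L^+_{kk}\geq L^+_{ik}+L^+_{km}.$$
   Context: $P=D^{-1}A$ for a nonnegative affinity matrix $A$ of a directed graph, $D=\mathrm{diag}(\sum_j a_{ij})$; strongly connected means all nodes mutually reachable. *)

(* Defs.v *)
From HB Require Import structures.
From mathcomp Require Import all_boot all_order all_algebra.
From mathcomp Require Import reals.
Set Implicit Arguments. Unset Strict Implicit. Unset Printing Implicit Defensive.
Import Order.TTheory GRing.Theory Num.Theory.
Local Open Scope ring_scope.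

Definition nonneg_mx (R : realType) (n : nat) (A : 'M[R]_n) : Prop :=
  forall i j, 0 <= A i j.

Definition edge_rel (R : realType) (n : nat) (A : 'M[R]_n) : rel 'I_n :=
  fun i j => 0 < A i j.

Definition strongly_connected (R : realType) (n : nat) (A : 'M[R]_n) : Prop :=
  forall i j, connect (edge_rel A) i j.

Definition degree_mx (R : realType) (n : nat) (A : 'M[R]_n) : 'M[R]_n :=
  diag_mx (\row_i (\sum_j A i j)).

Definition transition_mx (R : realType) (n : nat) (A : 'M[R]_n) : 'M[R]_n :=
  invmx (degree_mx A) *m A.

Definition stationary_dist (R : realType) (n : nat) (P : 'M[R]_n) (pi : 'rV[R]_n)
  : Prop :=
  (forall i, 0 <= pi 0 i) /\ \sum_i pi 0 i = 1 /\ pi *m P = pi.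

Definition laplacian_mx (R : realType) (n : nat) (P : 'M[R]_n) (pi : 'rV[R]_n)
  : 'M[R]_n :=
  diag_mx pi *m (1%:M - P).

Definition is_MP_pinv (R : realType) (m n : nat) (M : 'M[R]_(m, n)) (X : 'M[R]_(n, m))
  : Prop :=
  [/\ M *m X *m M = M, X *m M *m X = X, (M *m X)^T = M *m X & (X *m M)^T = X *m M].

(* Main.v *)
Require Import Defs.
From HB Require Import structures.
From mathcomp Require Import all_boot all_order all_algebra.
From mathcomp Require Import reals.
From mathcomp Require Import zify.
From mathcomp.algebra_tactics Require Import ring lra.
Import Order.TTheory GRing.Theory Num.Theory.
Local Open Scope ring_scope.

Lemma closed_conn (T : finType) (e : rel T) (S : pred T) :
  (forall x y, S x -> e x y -> S y) -> forall x y, connect e x y -> S x -> S y.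
Proof.
move=> cl x y /connectP [p pth ->]; elim: p x pth => [|z p IH] x //= /andP [exz pth] Sx.
exact: (IH z pth (cl x z Sx exz)).
Qed.

Lemma minprin (R : realType) n (e : rel 'I_n) (Q : 'M[R]_n) (u : 'I_n -> R) k :
  (forall i j, 0 <= Q i j) -> (forall i j, e i j -> 0 < Q i j) ->
  (forall i, \sum_j Q i j = 1) -> (forall i j, connect e i j) ->
  (forall j, j != k -> \sum_l Q j l * u l <= u j) -> forall i, u k <= u i.
Proof.
move=> Q0 Qe Q1 conn sup i.
have [j0 _ j0min] := @arg_minP _ R _ i predT u erefl.
have {}j0min : forall j, u j0 <= u j by move=> j; exact: j0min.
have [ukmu|ukmu] := eqVneq (u k) (u j0); first by rewrite ukmu.
suff : u k == u j0 by rewrite (negbTE ukmu).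
apply: (@closed_conn _ e (fun x => u x == u j0) _ j0 k (conn j0 k)); last by [].
move=> {i}.
move=> x y /eqP uxmu exy.
have xk : x != k by apply/eqP => xk; move: ukmu; rewrite -xk uxmu eqxx.
have h : \sum_l Q x l * (u l - u j0) = 0.
  apply/eqP; rewrite eq_le; apply/andP; split.
  - rewrite (eq_bigr (fun l => Q x l * u l - Q x l * u j0)); last by move=> l _; rewrite mulrBr.
    by rewrite sumrB -mulr_suml Q1 mul1r subr_le0 -uxmu; exact: sup.
  - by apply: sumr_ge0 => l _; apply: mulr_ge0 => //; rewrite subr_ge0.
have hpos : forall l, predT l -> 0 <= Q x l * (u l - u j0).
  by move=> l _; apply: mulr_ge0 => //; rewrite subr_ge0.
have := @psumr_eq0P _ _ predT (fun l => Q x l * (u l - u j0)) hpos h y isT.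
move=> /= /eqP; rewrite mulf_eq0 (gt_eqF (Qe _ _ exy)) /= subr_eq0; exact.
Qed.

Theorem mainTheorem16 (R : realType) (n : nat) (A : 'M[R]_n) (pi : 'rV[R]_n)
    (Lp : 'M[R]_n) :
  nonneg_mx A ->
  strongly_connected A ->
  stationary_dist (transition_mx A) pi ->
  is_MP_pinv (laplacian_mx (transition_mx A) pi) Lp ->
  forall i k m : 'I_n, Lp i m + Lp k k >= Lp i k + Lp k m.
Proof.
move=> A0 conn [pi0 [pi1 piP]] [H1 H2 H3 H4] i k m.
have [n_le1|n_gt1] := leqP n 1.
  have ik : i = k by apply/val_inj; move: (ltn_ord i) (ltn_ord k) => /=; lia.
  have im : i = m by apply/val_inj; move: (ltn_ord i) (ltn_ord m) => /=; lia.
  by rewrite -ik -im.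
pose d j := \sum_l A j l.
have dpos : forall j, 0 < d j.
  move=> j.
  have jlt : ((if val j == 0%N then 1%N else 0%N) < n)%N by case: ifP; lia.
  pose j' := Ordinal jlt.
  have jj' : j != j' by apply/eqP => /(congr1 val) /=; case: (nat_of_ord j).
  have /connectP [p pth lst] := conn j j'.
  case: p pth lst => [|z p] /=; first by move=> _ E; rewrite -E eqxx in jj'.
  move=> /andP [ejz _] _.
  rewrite /d (bigD1 z) //=; apply: (lt_le_trans ejz); rewrite lerDl.
  by apply: sumr_ge0 => l _; exact: A0.
set P := transition_mx A.
have Pij : forall j l, P j l = A j l / d j.
  have Du : degree_mx A \in unitmx.
    rewrite unitmxE det_diag unitfE; apply/prodf_neq0 => j _.
    by rewrite mxE gt_eqF //; exact: dpos.
  have DP : degree_mx A *m P = A by rewrite /P /transition_mx mulKVmx.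
  move=> j l; rewrite -DP /degree_mx mul_diag_mx !mxE.
  rewrite -/(d j) mulrC mulKf //; by rewrite gt_eqF // (dpos j).
have P0 : forall j l, 0 <= P j l.
  by move=> j l; rewrite Pij divr_ge0 // ?A0 // ltW // (dpos j).
have Pe : forall j l, 0 < A j l -> 0 < P j l.
  by move=> j l a; rewrite Pij divr_gt0 //; exact: dpos.
have P1 : forall j, \sum_l P j l = 1.
  move=> j; under eq_bigr do rewrite Pij.
  by rewrite -mulr_suml divff // gt_eqF // (dpos j).
have piPe : forall l, pi 0 l = \sum_j pi 0 j * P j l.
  by move=> l; rewrite -{1}piP mxE.
have pipos : forall j, 0 < pi 0 j.
  have /existsP [l pl] : [exists l, 0 < pi 0 l].
    apply/contraT => /existsPn h.
    move: pi1; rewrite big1 => [/eqP|j _]; first by rewrite eq_sym oner_eq0.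
    by apply/le_anti; rewrite pi0 andbT leNgt h.
  move=> j; apply: (@closed_conn _ (edge_rel A) (fun x => 0 < pi 0 x) _ l j (conn l j) pl).
  move=> x y px exy; rewrite piPe (bigD1 x) //=.
  apply: (@lt_le_trans _ _ (pi 0 x * P x y)); first by rewrite mulr_gt0 // Pe.
  rewrite lerDl; apply: sumr_ge0 => z _; by rewrite mulr_ge0.
set L := laplacian_mx P pi in H1 H2 H3 H4.
have Lcol : forall (v : 'cV[R]_n) j, (L *m v) j 0 = pi 0 j * (v j 0 - \sum_l P j l * v l 0).
  move=> v j; rewrite /L /laplacian_mx -mulmxA mulmxBl mul1mx mul_diag_mx !mxE.
  by congr (_ * (_ - _)); rewrite mxE.
have Lrow : forall (w : 'rV[R]_n) l, (w *m L) 0 l = w 0 l * pi 0 l - \sum_j w 0 j * pi 0 j * P j l.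
  move=> w l; rewrite /L /laplacian_mx mulmxA mulmxBr mulmx1 mul_mx_diag !mxE.
  by congr (_ - _); apply: eq_bigr => j _; rewrite mxE.
pose y : 'cV[R]_n := delta_mx m 0 - delta_mx k 0.
pose Q := L *m Lp.
pose z := y - Q *m y.
have QL : Q *m L = L by [].
have QQ : Q *m Q = Q by rewrite /Q mulmxA H1.
have Qz : Q *m z = 0 by rewrite /z mulmxBr mulmxA QQ subrr.
have zQ : z^T *m Q = 0 by rewrite /Q -H3 -trmx_mul Qz trmx0.
have zL : z^T *m L = 0 by rewrite -QL mulmxA zQ mul0mx.
pose zz j := z j 0.
pose Qr : 'M[R]_n := \matrix_(l, j) (pi 0 j * P j l / pi 0 l).
have Qrsum : forall l (f : 'I_n -> R), \sum_j Qr l j * f j = (\sum_j f j * pi 0 j * P j l) / pi 0 l.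
  move=> l f; rewrite mulr_suml; apply: eq_bigr => j _; rewrite mxE; ring.
have zh : forall l, \sum_j Qr l j * zz j = zz l.
  move=> l; have := congr1 (fun M : 'M[R]_(1,n) => M 0 l) zL; rewrite Lrow => /eqP.
  rewrite [X in _ == X]mxE subr_eq0 => /eqP e.
  have tr : forall j, z^T 0 j = zz j by move=> j; rewrite mxE.
  have e' : \sum_j zz j * pi 0 j * P j l = zz l * pi 0 l.
    by rewrite -(tr l) e; apply: eq_bigr => j _; rewrite tr.
  by rewrite Qrsum e' mulfK // gt_eqF.
have conn' : forall x y, connect [rel a b | edge_rel A b a] x y.
  by move=> a b; rewrite connect_rev; exact: conn.
have Qr0 : forall a b, 0 <= Qr a b.
  by move=> a b; rewrite mxE divr_ge0 ?mulr_ge0 // ltW.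
have Qre : forall a b, [rel a b | edge_rel A b a] a b -> 0 < Qr a b.
  by move=> a b /= e; rewrite mxE divr_gt0 ?mulr_gt0 // Pe.
have Qr1 : forall a, \sum_b Qr a b = 1.
  move=> a; have := Qrsum a (fun _ => 1); under eq_bigr do rewrite mulr1.
  move=> ->; under eq_bigr do rewrite mul1r.
  by rewrite -piPe divff // gt_eqF.
have zc : forall j, zz j = zz k.
  move=> j; apply/le_anti/andP; split.
  - rewrite -lerN2; apply: (@minprin _ _ _ Qr (fun x => - zz x) k Qr0 Qre Qr1 conn') => x _.
    by under eq_bigr do rewrite mulrN; rewrite sumrN zh.
  - apply: (@minprin _ _ _ Qr zz k Qr0 Qre Qr1 conn') => x _.
    by rewrite zh.
have zTz : z^T *m z = z^T *m y.
  have h : z^T *m (y - Q *m y) = z^T *m y by rewrite mulmxBr mulmxA zQ mul0mx subr0.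
  exact: h.
have zdef : z = y - Q *m y by [].
clearbody z.
have zsq : \sum_j zz j ^+ 2 = 0.
  have e1 : (z^T *m z) 0 0 = \sum_j zz j ^+ 2.
    by rewrite mxE; apply: eq_bigr => j _; rewrite mxE expr2.
  have e2 : (z^T *m y) 0 0 = 0.
    by rewrite /y mulmxBr -!colE !mxE -/(zz m) -/(zz k) (zc m) subrr.
  by rewrite -e1 zTz e2.
have zj : forall j, zz j = 0.
  move=> j; apply/eqP; rewrite -sqrf_eq0; apply/eqP.
  exact: (@psumr_eq0P _ _ predT (fun j => zz j ^+ 2) (fun j _ => sqr_ge0 (zz j)) zsq j isT).
have z0 : z = 0 by apply/matrixP => a b; rewrite ord1 mxE; exact: zj.
have Qy : Q *m y = y.
  have h : y - Q *m y = 0 by rewrite -zdef.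
  by apply/esym/subr0_eq.
pose u := Lp *m y.
have Lu : L *m u = y by rewrite /u mulmxA -/Q Qy.
have sup : forall j, j != k -> \sum_l P j l * u l 0 <= u j 0.
  move=> j jk; rewrite -subr_ge0 -(pmulr_rge0 _ (pipos j)) -Lcol Lu !mxE (negbTE jk) subr0.
  by rewrite ler0n.
have := @minprin _ _ (edge_rel A) P (fun j => u j 0) k P0 Pe P1 conn sup i.
rewrite /u mulmxBr -!colE !mxE => h.
lra.
Qed.
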